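(* Let $k$ be an algebraically closed field, let $A$ be a local Noetherian $k$-algebra with maximal ideal $\mathfrak{m}$ and residue field $k$, and let $M$ be a finitely generated $A$-module. Then the equalities $$\dim_k (M \otimes_A A/I_n) = n \,\dim_k (M \otimes_A k)$$ hold for all integers $n > 0$ and all ideals $I_n \subset A$ of colength $n$ if and only if the equalities $$\dim_k (M \otimes_A A/\mathfrak{m}^n) = \dim_k (A/\mathfrak{m}^n)\cdot \dim_k (M \otimes_A k)$$ hold for all integers $n > 0$.
   Context: An ideal $I \subset A$ is said to be of colength $n$ if $A/I$ is an Artinian $k$-algebra with $\dim_k A/I = n$. *)

(* Defs.v *)
From HB Require Import structures.
From mathcomp Require Import all_boot all_order all_algebra.
Set Implicit Arguments. Unset Strict Implicit. Unset Printing Implicit Defensive.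
Import GRing.Theory.
Local Open Scope ring_scope.

Section CommAlg.
Variables (k : fieldType) (A : comAlgType k).

Definition is_ideal (I : A -> Prop) : Prop :=
  [/\ I 0, (forall x y, I x -> I y -> I (x + y)) & (forall a x, I x -> I (a * x))].

Definition is_proper_ideal (I : A -> Prop) : Prop := is_ideal I /\ ~ I 1.

Definition is_maximal_ideal (m : A -> Prop) : Prop :=
  is_proper_ideal m /\
  forall J : A -> Prop, is_proper_ideal J -> (forall x, m x -> J x) ->
    forall x, J x -> m x.

Definition ideal_gen (s : seq A) : A -> Prop :=
  fun a => exists t : seq (A * A),
    (forall p, p \in t -> p.2 \in s) /\ a = \sum_(p <- t) p.1 * p.2.

Definition noetherian_ring : Prop :=
  forall I : A -> Prop, is_ideal I ->
    exists s : seq A, forall a, I a <-> ideal_gen s a.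

(* A is local with maximal ideal m and residue field k
   (the composite k -> A -> A/m is onto) *)
Definition local_residue_k (m : A -> Prop) : Prop :=
  [/\ is_maximal_ideal m,
      (forall J : A -> Prop, is_proper_ideal J -> forall x, J x -> m x)
    & (forall a : A, exists c : k, m (a - c%:A))].

Definition ideal_mul (I J : A -> Prop) : A -> Prop :=
  fun a => exists t : seq (A * A),
    (forall p, p \in t -> I p.1 /\ J p.2) /\ a = \sum_(p <- t) p.1 * p.2.

Fixpoint ideal_pow (m : A -> Prop) (n : nat) : A -> Prop :=
  match n with
  | 0 => fun _ => True
  | n'.+1 => ideal_mul (ideal_pow m n') m
  end.

(* dim_k (V / N) = d, for V a k-vector space given by the scaling sc *)
Definition quot_dim (V : zmodType) (sc : k -> V -> V) (N : V -> Prop) (d : nat)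
  : Prop :=
  exists v : 'I_d -> V,
    (forall c : 'I_d -> k, N (\sum_(i < d) sc (c i) (v i)) -> forall i, c i = 0)
    /\ (forall x : V, exists c : 'I_d -> k, N (x - \sum_(i < d) sc (c i) (v i))).

Definition ring_quot_dim (I : A -> Prop) (d : nat) : Prop :=
  quot_dim (fun (c : k) (a : A) => c *: a) I d.

Definition colength (I : A -> Prop) (n : nat) : Prop :=
  is_ideal I /\ ring_quot_dim I n.

Section Modules.
Variable M : lmodType A.

Definition mod_finitely_generated : Prop :=
  exists s : seq M, forall x : M, exists t : seq (A * M),
    (forall p, p \in t -> p.2 \in s) /\ x = \sum_(p <- t) p.1 *: p.2.

Definition submod_mul (I : A -> Prop) : M -> Prop :=
  fun x => exists t : seq (A * M),
    (forall p, p \in t -> I p.1) /\ x = \sum_(p <- t) p.1 *: p.2.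

(* dim_k (M (x)_A A/I) = dim_k (M / I M) = d *)
Definition tensor_quot_dim (I : A -> Prop) (d : nat) : Prop :=
  quot_dim (fun (c : k) (x : M) => c%:A *: x) (submod_mul I) d.

End Modules.
End CommAlg.

(* Main.v *)
Require Import Defs.
From HB Require Import structures.
From mathcomp Require Import all_boot all_order all_algebra.
From Stdlib Require Import Classical ClassicalEpsilon.
Set Implicit Arguments. Unset Strict Implicit. Unset Printing Implicit Defensive.
Import GRing.Theory.
Local Open Scope ring_scope.


Lemma fchoice (I T : Type) (P : I -> T -> Prop) :
  (forall i, exists x, P i x) -> exists f : I -> T, forall i, P i (f i).
Proof.
move=> h; exists (fun i => proj1_sig (constructive_indefinite_description _ (h i))).
by move=> i; exact: (proj2_sig (constructive_indefinite_description _ (h i))).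
Qed.

Lemma zid (V : zmodType) (x u S T : V) : x - (u + S) + (u + T) = x - (S - T).
Proof. rewrite opprD opprB -!addrA; congr (_ + _). by rewrite addrCA addKr addrC. Qed.

Section LA.
Variables (k : fieldType) (V : lmodType k) (N : V -> Prop).
Hypothesis N0 : N 0.
Hypothesis ND : forall x y, N x -> N y -> N (x + y).
Hypothesis NZ : forall (c : k) x, N x -> N (c *: x).

Lemma NN x : N x -> N (- x).
Proof. by move=> h; rewrite -scaleN1r; apply: NZ. Qed.

Lemma NB x y : N x -> N y -> N (x - y).
Proof. by move=> hx hy; apply: ND => //; apply: NN. Qed.

Lemma Nsum (I : Type) (r : seq I) (P : pred I) (F : I -> V) :
  (forall i, P i -> N (F i)) -> N (\sum_(i <- r | P i) F i).
Proof. by move=> h; apply: big_ind => //. Qed.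

Definition indep n (v : 'I_n -> V) :=
  forall c : 'I_n -> k, N (\sum_(i < n) c i *: v i) -> forall i, c i = 0.
Definition spans n (v : 'I_n -> V) :=
  forall x : V, exists c : 'I_n -> k, N (x - \sum_(i < n) c i *: v i).

Lemma comb p q (y : 'I_p -> V) (w : 'I_q -> V) (P : 'M[k]_(p, q)) (c : 'rV[k]_p) :
  (forall i, N (y i - \sum_j P i j *: w j)) ->
  N (\sum_i c 0 i *: y i - \sum_j (c *m P) 0 j *: w j).
Proof.
move=> h.
have -> : \sum_i c 0 i *: y i - \sum_j (c *m P) 0 j *: w j =
   \sum_i c 0 i *: (y i - \sum_j P i j *: w j).
  under [X in _ - X]eq_bigr do rewrite mxE scaler_suml.
  rewrite exchange_big /= -sumrB; apply: eq_bigr => i _.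
  by rewrite scalerBr scaler_sumr; congr (_ - _); apply: eq_bigr => j _; rewrite scalerA.
by apply: Nsum => i _; apply: NZ.
Qed.


Lemma coefmx p D (y : 'I_p -> V) (w : 'I_D -> V) :
  spans w -> exists P : 'M[k]_(p, D), forall i, N (y i - \sum_j P i j *: w j).
Proof.
move=> sw; have [f hf] := fchoice (fun i => sw (y i)).
exists (\matrix_(i, j) f i j) => i.
by under eq_bigr do rewrite mxE.
Qed.

Lemma LA3 D p (w : 'I_D -> V) (y : 'I_p -> V) :
  spans w -> indep y -> (p <= D)%N.
Proof.
move=> sw iy; rewrite leqNgt; apply/negP => hpD.
have [P hP] := coefmx y sw.
have : kermx P != 0.
  rewrite kermx_eq0 /row_free; apply/negP => /eqP hr.
  by move: (rank_leq_col P); rewrite hr leqNgt hpD.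
case: (pickP (fun i => row i (kermx P) != 0)) => [i hi _|h0]; last first.
  case/negP; apply/eqP/row_matrixP => i; rewrite row0; apply/eqP.
  by move: (h0 i) => /negbFE.
pose c := row i (kermx P).
have hc : c *m P = 0 by rewrite /c -row_mul mulmx_ker row0.
have := comb c hP; rewrite hc.
under [X in N (_ - X)]eq_bigr do rewrite mxE scale0r.
rewrite big1_eq subr0 => hN.
case/negP: hi; apply/eqP/rowP => j; rewrite mxE.
by move: (iy _ hN j); rewrite /c mxE => ->; rewrite mxE.
Qed.


Lemma sum_delta n (w : 'I_n -> V) j : \sum_i (j == i)%:R *: w i = w j.
Proof.
rewrite (bigD1 j) //= eqxx scale1r big1 ?addr0 // => i /negbTE hi.
by rewrite eq_sym hi scale0r.
Qed.

Lemma indep_mx D (w : 'I_D -> V) (c : 'rV[k]_D) :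
  indep w -> N (\sum_j c 0 j *: w j) -> c = 0.
Proof. by move=> iw h; apply/rowP => j; rewrite mxE; apply: (iw (fun j => c 0 j)). Qed.

Lemma LA2 D (w : 'I_D -> V) (y : 'I_D -> V) :
  indep w -> spans w -> spans y -> indep y.
Proof.
move=> iw sw sy.
have [P hP] := coefmx y sw.
have [Q hQ] := coefmx w sy.
have QP1 : Q *m P = 1%:M.
  apply/row_matrixP => j; apply/eqP; rewrite eq_sym -subr_eq0; apply/eqP.
  apply: (@indep_mx D w) => //.
  have := ND (hQ j) (comb (row j Q) hP).
  have -> : (w j - \sum_j0 Q j j0 *: y j0) + (\sum_i row j Q 0 i *: y i -
     \sum_j0 (row j Q *m P) 0 j0 *: w j0) = w j - \sum_j0 (row j Q *m P) 0 j0 *: w j0.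
    under [X in _ + (X - _)]eq_bigr do rewrite mxE.
    by rewrite addrA subrK.
  congr N; rewrite -(sum_delta w j) -sumrB; apply: eq_bigr => i _.
  by rewrite -row_mul !mxE scalerBl.
have PQ1 := mulmx1C QP1.
move=> c hc.
pose cr : 'rV[k]_D := \row_i c i.
have := comb cr hP.
under eq_bigr do rewrite mxE.
move=> /(NB hc); rewrite opprB addrC subrK => h.
have hcP : cr *m P = 0 by apply: (@indep_mx D w).
move=> i; have : cr *m P *m Q = cr by rewrite -mulmxA PQ1 mulmx1.
by rewrite hcP mul0mx => /rowP /(_ i); rewrite !mxE.
Qed.


Lemma LA4 p (y : 'I_p -> V) : spans y -> exists d (v : 'I_d -> V), indep v /\ spans v.
Proof.
elim: p y => [|p IH] y sy.
  exists 0%N, y; split => // c _ [] //.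
case: (classic (indep y)) => [iy|niy]; first by exists p.+1, y.
have [c [hc [i hi]]] : exists c, N (\sum_i c i *: y i) /\ exists i, c i <> 0.
  apply: NNPP => hn; apply: niy => c hc i; apply: NNPP => hci.
  by apply: hn; exists c; split => //; exists i.
apply: (IH (fun j => y (lift i j))) => x.
have [a ha] := sy x.
exists (fun j => a (lift i j) - a i / c i * c (lift i j)).
have := ND ha (NZ (a i / c i) hc).
congr N.
rewrite (bigD1_ord i) //= (bigD1_ord i (P := xpredT)) //=.
rewrite scalerDr scalerA divfK //; last by apply/eqP.
under [in RHS]eq_bigr do rewrite scalerBl -scalerA.
by rewrite sumrB -scaler_sumr zid.
Qed.

End LA.



Section Ring.
Variables (k : fieldType) (A : comAlgType k).

Section Ideal.
Variable I : A -> Prop.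
Hypothesis hI : is_ideal I.
Lemma I0 : I 0. Proof. by case: hI. Qed.
Lemma ID x y : I x -> I y -> I (x + y). Proof. by case: hI => _ h _; apply: h. Qed.
Lemma IM a x : I x -> I (a * x). Proof. by case: hI => _ _ h; apply: h. Qed.
Lemma IMr a x : I x -> I (x * a). Proof. by rewrite mulrC; apply: IM. Qed.
Lemma IZ (c : k) x : I x -> I (c *: x). Proof. by rewrite -mulr_algl; apply: IM. Qed.
Lemma IN x : I x -> I (- x). Proof. by rewrite -mulN1r; apply: IM. Qed.
Lemma IB x y : I x -> I y -> I (x - y). Proof. by move=> hx hy; apply: ID => //; apply: IN. Qed.
Lemma Isum (J : Type) (r : seq J) (P : pred J) (F : J -> A) :
  (forall i, P i -> I (F i)) -> I (\sum_(i <- r | P i) F i).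
Proof. by move=> h; apply: big_ind => //; [exact: I0 | exact: ID]. Qed.
End Ideal.

Lemma ideal_mul_ideal (I J : A -> Prop) : is_ideal I -> is_ideal (ideal_mul I J).
Proof.
move=> hI; split.
- by exists [::]; rewrite big_nil.
- move=> x y [t1 [h1 ->]] [t2 [h2 ->]]; exists (t1 ++ t2); rewrite big_cat; split => //.
  by move=> p; rewrite mem_cat => /orP [] ?; [apply: h1 | apply: h2].
- move=> a x [t [h ->]]; exists [seq (a * p.1, p.2) | p <- t]; split.
    move=> q /mapP [p pt ->] /=; have [h1 h2] := h p pt; split => //; exact: IM.
  by rewrite big_map mulr_sumr; apply: eq_bigr => p _; rewrite mulrA.
Qed.

Lemma mul_mem (I J : A -> Prop) a b : I a -> J b -> ideal_mul I J (a * b).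
Proof.
by move=> ha hb; exists [:: (a, b)]; rewrite big_seq1; split => // p; rewrite inE => /eqP ->.
Qed.

Lemma ideal_mul_sub (I J : A -> Prop) x : is_ideal I -> ideal_mul I J x -> I x.
Proof.
move=> hI [t [h ->]]; rewrite big_seq; apply: Isum => // p pt.
by apply: IMr => //; case: (h p pt).
Qed.

Lemma ideal_True : is_ideal (fun _ : A => True).
Proof. by []. Qed.

Lemma pow_ideal (m : A -> Prop) j : is_ideal (ideal_pow m j).
Proof. by elim: j => [|j IH] //=; apply: ideal_mul_ideal. Qed.

Lemma pow_S_sub (m : A -> Prop) j x : ideal_pow m j.+1 x -> ideal_pow m j x.
Proof. by apply: ideal_mul_sub; apply: pow_ideal. Qed.

Lemma pow_sub_le (m : A -> Prop) i j x : (i <= j)%N -> ideal_pow m j x -> ideal_pow m i x.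
Proof.
move=> /subnK <-; elim: (j - i)%N x => [|d IH] x //=.
by move=> h; apply: IH; apply: (@pow_S_sub m (d + i)).
Qed.

Lemma IG (s : seq A) a : ideal_gen s a -> exists g : 'I_(size s) -> A, a = \sum_l g l * s`_l.
Proof.
case=> t [ht ->]; elim: t ht => [|p t IH] ht.
  by exists (fun _ => 0); rewrite big_nil big1 // => l _; rewrite mul0r.
have [|g hg] := IH; first by move=> q qt; apply: ht; rewrite inE qt orbT.
have hp : (index p.2 s < size s)%N by rewrite index_mem; apply: ht; rewrite inE eqxx.
exists (fun l => g l + (if l == Ordinal hp then p.1 else 0)).
rewrite big_cons hg addrC; under [in RHS]eq_bigr do rewrite mulrDl.
rewrite big_split /=; congr (_ + _).
rewrite (bigD1 (Ordinal hp)) //= eqxx big1 ?addr0 /=; first by rewrite nth_index // ht // inE eqxx.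
by move=> l /negbTE ->; rewrite mul0r.
Qed.

Section Local.
Variable m : A -> Prop.
Hypothesis hloc : local_residue_k m.

Lemma m_ideal : is_ideal m. Proof. by case: hloc => [[[]]]. Qed.
Lemma m_not1 : ~ m 1. Proof. by case: hloc => [[[]]]. Qed.

Definition rho (a : A) : k :=
  proj1_sig (constructive_indefinite_description _ (let: And3 _ _ h := hloc in h a)).
Lemma rhoP a : m (a - (rho a)%:A).
Proof. rewrite /rho; case: hloc => _ _ h /=. exact: proj2_sig (constructive_indefinite_description _ (h a)). Qed.

Lemma alg_mul (c d : k) : c%:A * d%:A = (c * d)%:A :> A.
Proof. by rewrite -scalerAl mul1r scalerA. Qed.

Lemma rho_uniq a c : m (a - c%:A) -> rho a = c.
Proof.
move=> h; apply: NNPP => hne; apply: m_not1.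
have hd : m ((c - rho a)%:A).
  have -> : (c - rho a)%:A = (a - (rho a)%:A) - (a - c%:A) :> A.
    by rewrite scalerBl opprB [in RHS]addrC addrA subrK.
  by apply: IB; [exact: m_ideal | exact: rhoP | exact: h].
have : m ((c - rho a)^-1%:A * (c - rho a)%:A) by apply: IM => //; exact: m_ideal.
rewrite alg_mul mulVf ?scale1r //; apply/eqP => /eqP; rewrite subr_eq0 => /eqP hh.
by apply: hne; rewrite hh.
Qed.

Lemma rho_alg c : rho (c%:A) = c. Proof. by apply: rho_uniq; rewrite subrr; apply: I0; exact: m_ideal. Qed.
Lemma rho0 : rho 0 = 0. Proof. by rewrite -(scale0r (1 : A)) rho_alg. Qed.
Lemma rho1 : rho 1 = 1. Proof. by rewrite -(scale1r (1 : A)) rho_alg. Qed.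
Lemma rho_m a : m a -> rho a = 0. Proof. by move=> h; apply: rho_uniq; rewrite scale0r subr0. Qed.
Lemma rhoD a b : rho (a + b) = rho a + rho b.
Proof.
apply: rho_uniq; have -> : a + b - (rho a + rho b)%:A = (a - (rho a)%:A) + (b - (rho b)%:A).
  by rewrite scalerDl opprD addrACA.
by apply: ID; [exact: m_ideal | exact: rhoP | exact: rhoP].
Qed.
Lemma rhoM a b : rho (a * b) = rho a * rho b.
Proof.
apply: rho_uniq; have -> : a * b - (rho a * rho b)%:A = (a - (rho a)%:A) * b + (rho a)%:A * (b - (rho b)%:A).
  by rewrite mulrBl mulrBr alg_mul addrA subrK.
apply: ID; first exact: m_ideal.
  by apply: IMr; [exact: m_ideal | exact: rhoP].
by apply: IM; [exact: m_ideal | exact: rhoP].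
Qed.
Lemma rhoN a : rho (- a) = - rho a.
Proof. by apply/eqP; rewrite -subr_eq0 opprK -rhoD addNr rho0. Qed.

Lemma rho_det n (B : 'M[A]_n) : rho (\det B) = \det (map_mx rho B).
Proof.
rewrite /determinant (big_morph rho rhoD rho0); apply: eq_bigr => s _.
rewrite rhoM (big_morph rho rhoM rho1); congr (_ * _).
  by case: (perm.odd_perm s) => //=; rewrite ?expr0 ?rho1 // expr1 rhoN rho1.
by apply: eq_bigr => i _; rewrite mxE.
Qed.

Lemma unit_of_rho u : rho u != 0 -> exists v, u * v = 1.
Proof.
move=> hu; apply: NNPP => hn; move/eqP: hu; apply.
apply: rho_m; case: hloc => _ hcont _.
apply: (hcont (fun x => exists v, x = u * v)).
- split; last by move=> [v hv]; apply: hn; exists v.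
  split; first by exists 0; rewrite mulr0.
    by move=> x y [v ->] [w ->]; exists (v + w); rewrite mulrDr.
  by move=> a x [v ->]; exists (a * v); rewrite mulrCA.
- by exists 1; rewrite mulr1.
Qed.


Hypothesis hnoeth : noetherian_ring A.

Lemma NAK (I J : A -> Prop) : is_ideal I -> is_ideal J ->
  (forall a, J a -> exists x y, I x /\ ideal_mul J m y /\ a = x + y) ->
  forall a, J a -> I a.
Proof.
move=> hI hJ hyp.
have [s hs] := hnoeth hJ.
pose p := size s.
have gJ : forall l : 'I_p, J s`_l.
  move=> l; apply/hs; exists [:: (1, s`_l)]; rewrite big_seq1 mul1r; split => // q.
  by rewrite inE => /eqP -> /=; apply: mem_nth.
have hG : forall a, exists f : 'I_p -> A, J a -> a = \sum_l f l * s`_l.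
  move=> a; case: (classic (J a)) => ha; last by exists (fun _ => 0).
  by have [g hg] := IG (proj1 (hs a) ha); exists g.
have [Gam hGam] := fchoice hG.
have hF0 : forall l : 'I_p, exists F : A * seq (A * A), I F.1 /\
    (forall q, q \in F.2 -> J q.1 /\ m q.2) /\ s`_l = F.1 + \sum_(q <- F.2) q.1 * q.2.
  move=> l; have [x [y [hx [[t [ht ->]] ->]]]] := hyp _ (gJ l).
  by exists (x, t).
have [F hF] := fchoice hF0.
pose C : 'M[A]_p := \matrix_(l, l') \sum_(q <- (F l).2) Gam q.1 l' * q.2.
have key : forall l : 'I_p, s`_l - \sum_l' C l l' * s`_l' = (F l).1.
  move=> l; have [_ [ht ->]] := hF l; rewrite -addrA; apply/eqP; rewrite addrC -subr_eq0 addrK subr_eq0; apply/eqP.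
  under [in RHS]eq_bigr do rewrite mxE big_distrl /=.
  rewrite exchange_big /= big_seq [in RHS]big_seq; apply: eq_bigr => q qt.
  rewrite [q.1 in LHS](hGam q.1 (proj1 (ht q qt))) big_distrl /=; apply: eq_bigr => l' _.
  by rewrite mulrAC.
pose B : 'M[A]_p := 1%:M - C.
pose G : 'M[A]_(p, 1) := \col_l s`_l.
have BG : forall l : 'I_p, (B *m G) l 0 = (F l).1.
  move=> l; rewrite -key mxE; under eq_bigr do rewrite !mxE mulrBl.
  rewrite sumrB; congr (_ - _); last by apply: eq_bigr => i _; rewrite mxE.
  rewrite (bigD1 l) //= eqxx mul1r big1 ?addr0 // => l' /negbTE hl.
  by rewrite eq_sym hl mul0r.
have hdet : forall l : 'I_p, I (\det B * s`_l).
  move=> l.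
  have : ((\det B)%:M *m G) l 0 = (\adj B *m (B *m G)) l 0 by rewrite mulmxA mul_adj_mx.
  rewrite mul_scalar_mx !mxE => ->; apply: Isum => // l' _; apply: IM => //.
  by rewrite BG; case: (hF l').
have hrho : rho (\det B) = 1.
  rewrite rho_det; have -> : map_mx rho B = 1%:M; last by rewrite det1.
  apply/matrixP => i j; rewrite !mxE rhoD rhoN.
  rewrite [X in _ - X]rho_m ?subr0; last first.
    rewrite big_seq; apply: Isum; first exact: m_ideal.
    move=> q qt; apply: IM; first exact: m_ideal.
    by have [_ [ht _]] := hF i; case: (ht q qt).
  by case: (i == j); rewrite ?rho1 ?rho0.
have [v hv] : exists v, \det B * v = 1 by apply: unit_of_rho; rewrite hrho oner_eq0.
move=> a ha; rewrite (hGam a ha); apply: Isum => // l _; apply: IM => //.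
by rewrite -[s`_l]mul1r -hv mulrAC; apply: IMr.
Qed.


Lemma S1 (I : A -> Prop) n : is_ideal I -> ring_quot_dim I n ->
  exists j, forall a, ideal_pow m j a -> I a.
Proof.
move=> hI [w [iw sw]].
case: (classic (exists i, forall a, ideal_pow m i a ->
   exists x y, I x /\ ideal_pow m i.+1 y /\ a = x + y)) => [[i hi]|hno].
  exists i; apply: NAK => //; exact: pow_ideal.
have hz : forall i : 'I_n.+1, exists z, ideal_pow m i z /\
    ~ exists x y, I x /\ ideal_pow m i.+1 y /\ z = x + y.
  move=> i; apply: NNPP => hn; apply: hno; exists i => a ha; apply: NNPP => hna.
  by apply: hn; exists a.
have [z hzP] := fchoice hz.
have iz : indep I z.
  move=> c hc.
  suff H : forall t (i : 'I_n.+1), (i < t)%N -> c i = 0 by move=> i; apply: (H i.+1).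
  elim=> [|t IH] i //; rewrite ltnS => hit.
  apply: NNPP => hci; have [_ hzn] := hzP i; apply: hzn.
  have hy : ideal_pow m i.+1 (\sum_(l | l != i) c l *: z l).
    apply: Isum; first exact: pow_ideal.
    move=> l hl; case: (ltngtP l i) => hli.
    - by rewrite (IH l (leq_trans hli hit)) scale0r; apply: I0; exact: pow_ideal.
    - apply: IZ; first exact: pow_ideal.
      by apply: (pow_sub_le (j := l)); [exact: hli | case: (hzP l)].
    - by move: hl; rewrite (val_inj hli) eqxx.
  move: hc; rewrite (bigD1 i) //= => hc.
  exists ((c i)^-1 *: (c i *: z i + \sum_(l | l != i) c l *: z l)),
         (- ((c i)^-1 *: \sum_(l | l != i) c l *: z l)).
  split; first exact: IZ.
  split; first by apply: (IN (pow_ideal m i.+1)); apply: (IZ (pow_ideal m i.+1)).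
  by rewrite scalerDr addrK scalerA mulVf ?scale1r //; apply/eqP.
have := LA3 (I0 hI) (ID hI) (IZ hI) sw iz.
by rewrite ltnn.
Qed.


Lemma span_pow j : exists p (f : 'I_p -> A), spans (ideal_pow m j) f.
Proof.
elim: j => [|j [p [f sf]]]; first by exists 0%N, (fun _ => 0) => x; exists (fun _ => 0).
have [s hs] := hnoeth (pow_ideal m j).
pose q := size s.
exists (p + q)%N, (fun i => match split i with inl a => f a | inr b => s`_b end) => x.
have [c hc] := sf x.
have [g hg] := IG (proj1 (hs _) hc).
exists (fun i => match split i with inl a => c a | inr b => rho (g b) end).
rewrite big_split_ord /=.
have hl : forall i : 'I_p, split (lshift q i) = inl i.
  by move=> i; rewrite -[lshift _ _]/(unsplit (inl _)) unsplitK.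
have hr : forall i : 'I_q, split (rshift p i) = inr i.
  by move=> i; rewrite -[rshift _ _]/(unsplit (inr _)) unsplitK.
under eq_bigr do rewrite hl.
under [X in _ - (_ + X)]eq_bigr do rewrite hr.
rewrite opprD addrA hg -sumrB.
apply: Isum; first exact: (pow_ideal m j.+1).
move=> l _; rewrite -mulr_algl -mulrBl mulrC.
apply: mul_mem; last exact: rhoP.
by apply/hs; exists [:: (1, s`_l)]; rewrite big_seq1 mul1r; split => // r; rewrite inE => /eqP -> /=; apply: mem_nth.
Qed.

Lemma S2 j : exists e, ring_quot_dim (ideal_pow m j) e.
Proof.
have [p [f sf]] := span_pow j.
have hI := pow_ideal m j.
have [d [v [h1 h2]]] := LA4 (ID hI) (IZ hI) sf. by exists d, v; split; [exact: h1 | exact: h2].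
Qed.

End Local.
End Ring.



Definition pidx e d (kk : 'I_(e * d)) : 'I_e * 'I_d := enum_val (cast_ord (esym (mxvec_cast e d)) kk).
Lemma pidxK e d (a : 'I_e) (i : 'I_d) : pidx (mxvec_index a i) = (a, i).
Proof. by rewrite /pidx /mxvec_index cast_ordK enum_rankK. Qed.
Lemma sum_pair (V : nmodType) e d (F : 'I_(e * d) -> V) :
  \sum_kk F kk = \sum_a \sum_i F (mxvec_index a i).
Proof.
rewrite (reindex (uncurry (@mxvec_index e d))) /=; last first.
  by apply: onW_bij; have [g h1 h2] := curry_mxvec_bij e d; exists g => z; [apply: h1 | apply: h2].
by rewrite pair_bigA; apply: eq_bigr => [[a i]] _.
Qed.
Lemma pidx_inj e d (kk : 'I_(e * d)) : kk = mxvec_index (pidx kk).1 (pidx kk).2.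
Proof. by case/mxvec_indexP: kk => a i; rewrite pidxK. Qed.

Section Mod.
Variables (k : fieldType) (A : comAlgType k) (M : lmodType A).
Definition Mk : Type := M.
HB.instance Definition _ := GRing.Zmodule.on Mk.
Definition scMk (c : k) (x : Mk) : Mk := (c%:A : A) *: (x : M).
Fact scMkA a b v : scMk a (scMk b v) = scMk (a * b) v.
Proof. by rewrite /scMk scalerA alg_mul. Qed.
Fact scMk1 : left_id 1 scMk.
Proof. by move=> v; rewrite /scMk scale1r scale1r. Qed.
Fact scMkDr : right_distributive scMk +%R.
Proof. by move=> a u v; rewrite /scMk scalerDr. Qed.
Fact scMkDl v : {morph scMk^~ v: a b / a + b}.
Proof. by move=> a b; rewrite /scMk scalerDl scalerDl. Qed.
HB.instance Definition _ := GRing.Zmodule_isLmodule.Build k Mk scMkA scMk1 scMkDr scMkDl.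

Definition SM (I : A -> Prop) : Mk -> Prop := fun x => @submod_mul k A M I x.

Lemma tq_conv (I : A -> Prop) d :
  tensor_quot_dim M I d <-> exists v : 'I_d -> Mk, indep (SM I) v /\ spans (SM I) v.
Proof. by []. Qed.

Lemma SM0 (I : A -> Prop) : @submod_mul k A M I 0.
Proof. by exists [::]; rewrite big_nil. Qed.

Lemma SMD (I : A -> Prop) x y : @submod_mul k A M I x -> submod_mul I y -> submod_mul I (x + y).
Proof.
move=> [t1 [h1 ->]] [t2 [h2 ->]]; exists (t1 ++ t2); rewrite big_cat; split => //.
by move=> p; rewrite mem_cat => /orP [] ?; [apply: h1 | apply: h2].
Qed.

Lemma SMscale (J J' : A -> Prop) a w : (forall b, J b -> J' (a * b)) ->
  @submod_mul k A M J w -> submod_mul J' (a *: w).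
Proof.
move=> hJ [t [h ->]]; exists [seq (a * p.1, p.2) | p <- t]; split.
  by move=> q /mapP [p pt ->] /=; apply: hJ; apply: h.
by rewrite big_map scaler_sumr; apply: eq_bigr => p _; rewrite scalerA.
Qed.

Lemma SM1 (J : A -> Prop) a (v : M) : J a -> submod_mul J (a *: v).
Proof. by move=> ha; exists [:: (a, v)]; rewrite big_seq1; split => // p; rewrite inE => /eqP ->. Qed.

Lemma SMsum (I : A -> Prop) (T : Type) (r : seq T) (P : pred T) (F : T -> M) :
  (forall i, P i -> submod_mul I (F i)) -> submod_mul I (\sum_(i <- r | P i) F i).
Proof. by move=> h; apply: big_ind => //; [exact: SM0 | exact: SMD]. Qed.

Lemma SMmono (I J : A -> Prop) (x : M) : (forall a, I a -> J a) -> submod_mul I x -> submod_mul J x.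
Proof. by move=> hIJ [t [h ->]]; exists t; split => // p /h; apply: hIJ. Qed.

Lemma SMid (I : A -> Prop) a (x : M) : is_ideal I -> submod_mul I x -> submod_mul I (a *: x).
Proof. by move=> hI; apply: SMscale => b; apply: IM. Qed.

Lemma SMN (I : A -> Prop) (x : M) : is_ideal I -> submod_mul I x -> submod_mul I (- x).
Proof. by move=> hI h; rewrite -scaleN1r; apply: SMid. Qed.

Lemma SMB (I : A -> Prop) (x y : M) : is_ideal I -> submod_mul I x -> submod_mul I y -> submod_mul I (x - y).
Proof. by move=> hI hx hy; apply: SMD => //; apply: SMN. Qed.

Lemma SMk0 (I : A -> Prop) : SM I 0. Proof. exact: SM0. Qed.
Lemma SMkD (I : A -> Prop) (x y : Mk) : SM I x -> SM I y -> SM I (x + y). Proof. exact: SMD. Qed.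
Lemma SMkZ (I : A -> Prop) (c : k) (x : Mk) : is_ideal I -> SM I x -> SM I (c *: x).
Proof. by move=> hI; apply: (SMid _ hI). Qed.

Lemma scMkE (c : k) (x : Mk) : c *: x = (c%:A : A) *: (x : M).
Proof. by []. Qed.

Section Main.
Variable m : A -> Prop.
Hypothesis hloc : local_residue_k m.
Variables (d : nat) (x : 'I_d -> M).
Hypothesis sx : spans (SM m) (x : 'I_d -> Mk).

Lemma M1 j (y : M) : exists a : 'I_d -> A, submod_mul (ideal_pow m j) (y - \sum_i a i *: x i).
Proof.
elim: j y => [|j IH] y.
  by exists (fun _ => 0); rewrite -[y - _]scale1r; apply: SM1.
have [a [t [ht hz]]] := IH y.
have [C hC] := fchoice sx.
exists (fun i => a i + \sum_(q <- t) q.1 * (C q.2 i)%:A).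
have -> : y - \sum_i (a i + \sum_(q <- t) q.1 * (C q.2 i)%:A) *: x i =
   \sum_(q <- t) q.1 *: (q.2 - \sum_i (C q.2 i)%:A *: x i).
  under eq_bigr do rewrite scalerDl.
  rewrite big_split /= opprD addrA hz.
  under [X in _ - X]eq_bigr do rewrite scaler_suml.
  rewrite exchange_big /= -sumrB; apply: eq_bigr => q _.
  by rewrite scalerBr scaler_sumr; congr (_ - _); apply: eq_bigr => i _; rewrite scalerA.
rewrite big_seq; apply: SMsum => q qt.
apply: (SMscale (J := m)); last exact: (hC q.2).
by move=> b hb; apply: mul_mem => //; apply: ht.
Qed.


Lemma scAk (c : k) (v : A) (z : M) : (c *: v) *: z = (c *: (v *: z : Mk) : Mk).
Proof. by rewrite scMkE scalerA mulr_algl. Qed.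

Lemma span_fam (J : A -> Prop) j nn (v : 'I_nn -> A) : is_ideal J ->
  (forall a, ideal_pow m j a -> J a) -> spans J v ->
  spans (SM J) (fun kk => (v (pidx kk).1 *: x (pidx kk).2 : Mk)).
Proof.
move=> hJ hsub sv y.
have [a ha] := M1 j y.
have [G hG] := fchoice (fun i => sv (a i)).
exists (fun kk => G (pidx kk).2 (pidx kk).1).
rewrite sum_pair; under eq_bigr do under eq_bigr do rewrite pidxK /=.
have -> : y - \sum_b \sum_i (G i b *: (v b *: x i : Mk) : Mk) =
    (y - \sum_i a i *: x i) + \sum_i (a i - \sum_b G i b *: v b) *: x i.
  under [X in _ = _ + X]eq_bigr do rewrite scalerBl scaler_suml.
  rewrite sumrB addrA subrK exchange_big /=; congr (_ - _).
  by apply: eq_bigr => b _; apply: eq_bigr => i _; rewrite scAk.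
apply: SMkD; first by apply: (SMmono hsub).
by apply: SMsum => i _; apply: SM1; apply: hG.
Qed.


Lemma fam_sum nn (v : 'I_nn -> A) (c : 'I_(nn * d) -> k) :
  \sum_kk (c kk *: (v (pidx kk).1 *: x (pidx kk).2 : Mk) : Mk) =
  \sum_i (\sum_b c (mxvec_index b i) *: v b) *: x i.
Proof.
rewrite sum_pair exchange_big /=; apply: eq_bigr => i _.
rewrite scaler_suml; apply: eq_bigr => b _.
by rewrite pidxK scAk.
Qed.

Hypothesis hnoeth : noetherian_ring A.

Lemma back (I : A -> Prop) n j e : is_ideal I -> ring_quot_dim I n ->
  (forall a, ideal_pow m j a -> I a) -> ring_quot_dim (ideal_pow m j) e ->
  tensor_quot_dim M (ideal_pow m j) (e * d) -> tensor_quot_dim M I (n * d).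
Proof.
move=> hI [v [iv sv]] hsub [u [iu su]] /tq_conv [W [iW sW]].
have hJ := pow_ideal m j.
have sY := span_fam hJ (fun a h => h) su.
have iY := LA2 (SMk0 _) (@SMkD _) (fun c => @SMkZ _ c ^~ hJ) iW sW sY.
have claimL : forall b : 'I_d -> A, submod_mul (ideal_pow m j) (\sum_i b i *: x i) ->
    forall i, ideal_pow m j (b i).
  move=> b hb.
  have [G hG] := fchoice (fun i => su (b i)).
  have h0 := iY (fun kk => G (pidx kk).2 (pidx kk).1).
  have hz : forall i bb, G i bb = 0.
    move=> i bb; have := h0 _ (mxvec_index bb i); rewrite pidxK; apply.
    rewrite /SM fam_sum.
    under eq_bigr do under eq_bigr do rewrite pidxK /=.
    have -> : \sum_i (\sum_b0 G i b0 *: u b0) *: x i =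
        \sum_i b i *: x i - \sum_i (b i - \sum_b0 G i b0 *: u b0) *: x i.
      by rewrite -sumrB; apply: eq_bigr => i0 _; rewrite scalerBl opprB addrC subrK.
    by apply: SMB => //; apply: SMsum => i0 _; apply: SM1; apply: hG.
  move=> i; have := hG i; congr (ideal_pow m j).
  by rewrite big1 ?subr0 // => bb _; rewrite hz scale0r.
have claimK : forall al : 'I_d -> A, submod_mul I (\sum_i al i *: x i) -> forall i, I (al i).
  move=> al [t [ht h]].
  have [Aq hAq] := fchoice (M1 j).
  pose b := fun i => al i - \sum_(q <- t) q.1 * Aq q.2 i.
  have hb : submod_mul (ideal_pow m j) (\sum_i b i *: x i).
    have -> : \sum_i b i *: x i = \sum_(q <- t) q.1 *: (q.2 - \sum_i Aq q.2 i *: x i).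
      under eq_bigr do rewrite scalerBl scaler_suml.
      rewrite sumrB h exchange_big /= -sumrB; apply: eq_bigr => q _.
      by rewrite scalerBr scaler_sumr; congr (_ - _); apply: eq_bigr => i _; rewrite scalerA.
    apply: SMsum => q _; apply: SMscale (hAq q.2) => a ha; exact: IM.
  move=> i; have := claimL _ hb i => /hsub hbi.
  have -> : al i = b i + \sum_(q <- t) q.1 * Aq q.2 i by rewrite /b subrK.
  apply: ID => //; rewrite big_seq; apply: Isum => // q qt; apply: IMr => //; exact: ht.
apply/tq_conv.
exists (fun kk => (v (pidx kk).1 *: x (pidx kk).2 : Mk)); split; last first.
  exact: (span_fam hI hsub sv).
move=> c hc kk; rewrite (pidx_inj kk).
move: hc; rewrite /SM fam_sum => /claimK hK.
exact: (iv _ (hK (pidx kk).2)).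
Qed.

End Main.
End Mod.


Theorem proposition4 (k : closedFieldType) (A : comAlgType k)
  (m : A -> Prop) (M : lmodType A) :
  noetherian_ring A -> local_residue_k m -> mod_finitely_generated M ->
  forall d : nat, tensor_quot_dim M m d ->
  ((forall n : nat, (0 < n)%N -> forall I : A -> Prop, colength I n ->
      tensor_quot_dim M I (n * d))
   <->
   (forall n : nat, (0 < n)%N -> forall e : nat, ring_quot_dim (ideal_pow m n) e ->
      tensor_quot_dim M (ideal_pow m n) (e * d))).
Proof.
move=> hnoeth hloc _ d hd; split.
- move=> H1 n hn [|e] he; last first.
    exact: (H1 e.+1 erefl (ideal_pow m n) (conj (pow_ideal m n) he)).
  case: he => v [_ sv].
  have [c hc] := sv 1.
  rewrite big_ord0 subr0 in hc.
  exists (fun _ => 0); split; first by move=> c' _ [i hi].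
  move=> y; exists (fun _ => 0); rewrite -[y - _]scale1r; exact: SM1.
- move=> H2 n hn I [hI hIn].
  have [j0 hj0] := S1 hloc hnoeth hI hIn.
  have [e he] := S2 hloc hnoeth j0.+1.
  have hsub : forall a, ideal_pow m j0.+1 a -> I a by move=> a /pow_S_sub /hj0.
  have [x [ix sx]] := hd.
  exact: (back sx hI hIn hsub he (H2 j0.+1 isT e he)).
Qed.
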